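(* Let $G=(V,E)$ be a temporal network, let $\pi$ be an ordering of $V$, and let $\delta\ge 0$. Let $e=(v,u,t)\in E$ be a temporal edge with $\pi(u)<\pi(v)$, and let $w\in N^{+}_{\pi}(u)$ be a vertex adjacent to $v$ in $G_S$. Put $L_2=E_{v,w}$ and $L_3=E_{u,w}$. Let $L_{12}[e]$ be the first edge of $L_2$ (in sorted order) whose timestamp is at least $t(e)$, and let $L_{13}[e]$ be the last edge of $L_3$ whose timestamp is at most $t(e)+\delta$. Then $e$ forms at least one $\delta$-temporal triangle with $w$ if and only if $L_{12}[e]$ and $L_{13}[e]$ exist and $$t(e)\le t(L_{12}[e])\le t(L_{13}[e])\le t(e)+\delta.$$
   Context: A temporal network $G=(V,E)$ is a finite multiset of temporal edges $(x,y,t)$ with $x\neq y\in V$ and timestamp $t=t(e)\in\mathbb{R}$; the edge goes from $x$ to $y$, and parallel edges (in both directions) are allowed. For distinct $x,y\in V$, $E_{x,y}$ denotes the list of temporal edges from $x$ to $y$, sorted by increasing timestamp. $G_S$ is the simple undirected graph on $V$ with $\{x,y\}$ an edge iff there is at least one temporal edge between $x$ and $y$; $N(x)$ is the neighbourhood of $x$ in $G_S$. For an ordering $\pi$ of $V$, $N^{+}_{\pi}(x)=\{y\in N(x):\pi(x)<\pi(y)\}$. For $\delta\ge 0$, a temporal edge $e=(a,b,t)$ forms a $\delta$-temporal triangle with a vertex $c$ if there exist temporal edges $(a,c,t_2)$ and $(b,c,t_3)$ in $E$ with $t\le t_2\le t_3\le t+\delta$. *)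

(* Defs.v *)
From HB Require Import structures.
From mathcomp Require Import all_boot all_order all_algebra.
From mathcomp Require Import reals.
Set Implicit Arguments. Unset Strict Implicit. Unset Printing Implicit Defensive.
Import Order.TTheory GRing.Theory Num.Theory.
Local Open Scope ring_scope.

Definition tedge (V : finType) (R : realType) := (V * V * R)%type.
Definition src {V : finType} {R : realType} (f : tedge V R) : V := f.1.1.
Definition dst {V : finType} {R : realType} (f : tedge V R) : V := f.1.2.
Definition ts  {V : finType} {R : realType} (f : tedge V R) : R := f.2.

(* A temporal network is a finite multiset of temporal edges, represented as a
   list E (multiplicities = repetitions); well-formed if no self loops. *)
Definition wf_tnet {V : finType} {R : realType} (E : seq (tedge V R)) : Prop :=
  forall f, f \in E -> src f != dst f.

Definition Exy {V : finType} {R : realType} (E : seq (tedge V R)) (x y : V)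
  : seq (tedge V R) :=
  sort (fun a b : tedge V R => ts a <= ts b)
       [seq f <- E | (src f == x) && (dst f == y)].

Definition adjS {V : finType} {R : realType} (E : seq (tedge V R)) (x y : V) : bool :=
  has (fun f => ((src f == x) && (dst f == y)) || ((src f == y) && (dst f == x))) E.

Definition Nplus {V : finType} {R : realType} (E : seq (tedge V R)) (pi : V -> nat)
  (x y : V) : bool := adjS E x y && (pi x < pi y)%N.

Definition forms_triangle {V : finType} {R : realType} (E : seq (tedge V R))
  (delta : R) (e : tedge V R) (c : V) : Prop :=
  exists t2 t3 : R,
    (src e, c, t2) \in E /\ (dst e, c, t3) \in E /\
    ts e <= t2 /\ t2 <= t3 /\ t3 <= ts e + delta.

Definition L12 {V : finType} {R : realType} (L2 : seq (tedge V R)) (e : tedge V R)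
  : option (tedge V R) := ohead [seq f <- L2 | ts e <= ts f].

Definition L13 {V : finType} {R : realType} (L3 : seq (tedge V R)) (delta : R)
  (e : tedge V R) : option (tedge V R) :=
  ohead (rev [seq f <- L3 | ts f <= ts e + delta]).

(* Main.v *)
Require Import Defs.
From mathcomp Require Import all_boot all_order all_algebra.
From mathcomp Require Import reals.
Import Order.TTheory GRing.Theory Num.Theory.
Local Open Scope ring_scope.

Lemma head_min (T : eqType) (r : rel T) (s : seq T) (P : pred T) x :
  transitive r -> sorted r s -> x \in s -> P x ->
  exists h, ohead [seq y <- s | P y] = Some h /\ h \in s /\ P h /\ (h = x \/ r h x).
Proof.
move=> tr Hs xs Px.
have Hf := sorted_filter tr P Hs.
have xin : x \in [seq y <- s | P y] by rewrite mem_filter Px xs.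
have hin : forall h, h \in [seq y <- s | P y] -> P h /\ h \in s.
  by move=> h; rewrite mem_filter => /andP[].
move: Hf xin hin; case: [seq y <- s | P y] => [|h l] //= Hf xin hin.
exists h; have [Ph hs] := hin h (mem_head _ _); split=> //; split=> //; split=> //.
move: xin; rewrite in_cons => /orP[/eqP->|xl]; first by left.
right; have /allP := order_path_min tr Hf; exact.
Qed.

Theorem theorem3p2 (V : finType) (R : realType) (E : seq (tedge V R))
  (pi : V -> nat) (delta : R) (v u w : V) (t : R) :
  wf_tnet E -> injective pi -> 0 <= delta ->
  (v, u, t) \in E -> (pi u < pi v)%N ->
  Nplus E pi u w -> adjS E v w ->
  forms_triangle E delta (v, u, t) w <->
  exists f12 f13 : tedge V R,
    L12 (Exy E v w) (v, u, t) = Some f12 /\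
    L13 (Exy E u w) delta (v, u, t) = Some f13 /\
    t <= ts f12 /\ ts f12 <= ts f13 /\ ts f13 <= t + delta.
Proof.
move=> _ _ _ _ _ _ _.
set le := (fun a b : tedge V R => ts a <= ts b).
have tr : transitive le by move=> a b c; rewrite /le => h1 h2; exact: le_trans h1 h2.
have tot : total le by move=> a b; rewrite /le; exact: le_total.
have trr : transitive (fun z : tedge V R => le^~ z).
  by move=> a b c h1 h2; exact: tr h2 h1.
have memE : forall x y f, f \in Exy E x y -> f = (x, y, ts f) /\ f \in E.
  move=> x y [[a b] c]; rewrite /Exy mem_sort mem_filter /src /dst /= => /andP[/andP[/eqP-> /eqP->] ->].
  by [].
have memE' : forall x y s, (x, y, s) \in E -> (x, y, s) \in Exy E x y.
  by move=> x y s H; rewrite /Exy mem_sort mem_filter /src /dst /= !eqxx H.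
split.
- case=> [t2 [t3 [H2 [H3 [h1 [h2 h3]]]]]]; rewrite /ts /= in h1 h3.
  have [f12 [Hf12e [f12in [Pf12 Hf12]]]] := head_min _ _ _ (fun f => ts (v,u,t) <= ts f) _
     tr (sort_sorted tot _) (memE' _ _ _ H2) h1.
  have Hsr : sorted (fun z : tedge V R => le^~ z) (rev (Exy E u w)).
    by rewrite rev_sorted; exact: sort_sorted.
  have Hin3 : (u, w, t3) \in rev (Exy E u w) by rewrite mem_rev; apply: memE'.
  have [f13 [Hf13e [f13in [Pf13 Hf13]]]] := head_min _ _ _ (fun f => ts f <= ts (v,u,t) + delta) _
     trr Hsr Hin3 h3.
  exists f12, f13; rewrite /L12 /L13 Hf12e -filter_rev Hf13e; do 3 split => //.
  split.
  + apply: (le_trans (y := t2)); first by case: Hf12 => [->|] //.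
    apply: (le_trans h2); case: Hf13 => [->|] //.
  + exact: Pf13.
- case=> [f12 [f13 [H12 [H13 [h1 [h2 h3]]]]]].
  exists (ts f12), (ts f13).
  have : f12 \in [seq f <- Exy E v w | ts (v, u, t) <= ts f].
    by move: H12; rewrite /L12; case: [seq _ <- _ | _] => //= a l [<-]; rewrite mem_head.
  rewrite mem_filter => /andP[_ /memE [e12 i12]].
  have : f13 \in rev [seq f <- Exy E u w | ts f <= ts (v, u, t) + delta].
    by move: H13; rewrite /L13; case: (rev _) => //= a l [<-]; rewrite mem_head.
  rewrite mem_rev mem_filter => /andP[_ /memE [e13 i13]].
  by rewrite /src /dst /= -e12 -e13.
Qed.
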